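(* Let $N\ge2$, $0=t_0<t_1<\dots<t_N=1$, $\delta_i:=t_i-t_{i-1}$, and assume $\alpha\delta\le\delta_i\le\delta$ for each $i\in\{1,\dots,N\}$, where $\alpha,\delta>0$. Let $\mathbf T$ be the $(N-1)\times(N-1)$ symmetric tridiagonal matrix with diagonal entries $\mathbf T_{i,i}=2(\delta_i+\delta_{i+1})$ and off-diagonal entries $\mathbf T_{i,i+1}=\mathbf T_{i+1,i}=\delta_{i+1}$. Then $\mathbf T$ is invertible and for all $i,j\in\{1,\dots,N-1\}$, $$|(\mathbf T^{-1})_{i,j}|\le\frac{1}{4\alpha^2(1+\alpha)^{|i-j|-1}}\,\frac1\delta.$$ *)

(* Defs.v *)
From mathcomp Require Import all_boot all_order all_algebra.
Set Implicit Arguments. Unset Strict Implicit. Unset Printing Implicit Defensive.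
Import Order.TTheory GRing.Theory Num.Theory.
Local Open Scope ring_scope.

Definition delta (R : ringType) (t : nat -> R) (k : nat) : R := t k - t k.-1.

(* Row/column index i : 'I_(N-1)
   (0-based) corresponds to the paper's index i+1, so
   T_{i,i} = 2 (delta_{i+1} + delta_{i+2}),
   T_{i,i+1} = T_{i+1,i} = delta_{i+2}  (paper: T_{i,i+1} = delta_{i+1}). *)
Definition Tmat (R : ringType) (N : nat) (t : nat -> R) : 'M[R]_(N.-1) :=
  \matrix_(i < N.-1, j < N.-1)
    if i == j :> nat then 2 * (delta t i.+1 + delta t i.+2)
    else if j == i.+1 :> nat then delta t i.+2
    else if i == j.+1 :> nat then delta t j.+2
    else 0.

(* Main.v *)
Require Import Defs.
From mathcomp Require Import all_boot all_order all_algebra.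
From mathcomp Require Import zify ring lra.
Import Order.TTheory GRing.Theory Num.Theory.
Local Open Scope ring_scope.

Lemma Tmat_sym (R : ringType) (N : nat) (t : nat -> R) (k l : 'I_(N.-1)) :
  Tmat N t k l = Tmat N t l k.
Proof.
rewrite !mxE.
case: (eqVneq k l) => [->|nkl]; first by [].
have h : ((k:nat) == (l:nat)) = false by apply/negbTE.
have h' : ((l:nat) == (k:nat)) = false by rewrite eq_sym.
rewrite h h'.
case: (eqVneq ((l:nat)) ((k:nat)).+1) => [->|h1].
  by case: eqP => //; lia.
by [].
Qed.

Lemma Tmat_off (R : ringType) (N : nat) (t : nat -> R) (k l : 'I_(N.-1)) :
  k != l -> Tmat N t l k != 0 -> ((k:nat) == ((l:nat)).+1) || ((l:nat) == ((k:nat)).+1).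
Proof.
move=> nkl; rewrite mxE.
have -> : ((l:nat) == (k:nat)) = false by apply/negbTE; rewrite eq_sym.
by case: ((k:nat) == _) => //; case: ((l:nat) == _) => //; rewrite eqxx.
Qed.

Lemma sum_if_uniq (R : numDomainType) (n : nat) (P Q : pred 'I_n) (c : R) :
  0 <= c -> (forall k1 k2, Q k1 -> Q k2 -> k1 = k2) ->
  \sum_(k | P k) (if Q k then c else 0) <= c.
Proof.
move=> c0 uQ.
have le1 : \sum_(k | P k) (if Q k then c else 0) <= \sum_k (if Q k then c else 0).
  rewrite [X in _ <= X](bigID P) /= lerDl; apply: sumr_ge0 => k _.
  by case: (Q k).
apply: (le_trans le1).
case: (pickP Q) => [k0 Hk0 | none].
  rewrite (bigD1 k0) //= Hk0 big1 ?addr0 // => k nk.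
  case Qk: (Q k) => //; by rewrite (uQ _ _ Qk Hk0) eqxx in nk.
by rewrite big1 // => k _; rewrite none.
Qed.

Lemma Tmat_off_sum (R : numDomainType) (N : nat) (t : nat -> R) (l : 'I_(N.-1)) :
  0 <= delta t l.+1 -> 0 <= delta t l.+2 ->
  \sum_(k | k != l) `|Tmat N t l k| <= delta t l.+1 + delta t l.+2.
Proof.
move=> d1 d2.
apply: (@le_trans _ _ (\sum_(k | k != l)
   ((if (k:nat) == ((l:nat)).+1 then delta t l.+2 else 0) +
    (if (l:nat) == ((k:nat)).+1 then delta t l.+1 else 0)))).
  apply: ler_sum => k nkl; rewrite mxE.
  have -> : ((l:nat) == (k:nat)) = false by apply/negbTE; rewrite eq_sym.
  case: eqP => [->|_]; first by rewrite ger0_norm // lerDl; case: ifP.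
  rewrite add0r; case: eqP => [e|_]; last by rewrite normr0.
  by rewrite e in d1 *; rewrite ger0_norm.
rewrite big_split /= addrC lerD //; apply: sum_if_uniq => // k1 k2 /eqP h1 /eqP h2;
  apply: ord_inj; lia.
Qed.

Lemma pointwise (R : numFieldType) (N : nat) (t : nat -> R)
  (y c : 'I_(N.-1) -> R) (l : 'I_(N.-1)) (K : R) :
  0 <= delta t l.+1 -> 0 <= delta t l.+2 -> 0 <= K ->
  \sum_k Tmat N t l k * y k = c l ->
  (forall k, k != l -> Tmat N t l k != 0 -> `|y k| <= K) ->
  2 * (delta t l.+1 + delta t l.+2) * `|y l| <=
    `|c l| + (delta t l.+1 + delta t l.+2) * K.
Proof.
move=> d1 d2 K0 Hs Hk.
have e : Tmat N t l l * y l = c l - \sum_(k | k != l) Tmat N t l k * y k.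
  by rewrite -Hs (bigD1 l) //= addrK.
have Tll : Tmat N t l l = 2 * (delta t l.+1 + delta t l.+2) by rewrite mxE eqxx.
have H1 : `|Tmat N t l l * y l| <= `|c l| + `|\sum_(k | k != l) Tmat N t l k * y k|.
  by rewrite e ler_normB.
rewrite normrM Tll ger0_norm in H1; last by apply: mulr_ge0 => //; apply: addr_ge0.
apply: (le_trans H1); rewrite lerD2l.
apply: (le_trans (ler_norm_sum _ _ _)).
apply: (@le_trans _ _ (\sum_(k | k != l) `|Tmat N t l k| * K)).
  apply: ler_sum => k nk; rewrite normrM.
  case: (eqVneq (Tmat N t l k) 0) => [->|nz]; first by rewrite normr0 !mul0r.
  by apply: ler_wpM2l => //; apply: Hk.
rewrite -mulr_suml; apply: ler_wpM2r => //.
exact: Tmat_off_sum.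
Qed.

Lemma global_bound (R : realFieldType) (N : nat) (t : nat -> R)
  (y c : 'I_(N.-1) -> R) (lb C : R) :
  0 < lb ->
  (forall l : 'I_(N.-1), 0 <= delta t l.+1 /\ 0 <= delta t l.+2) ->
  (forall l : 'I_(N.-1), lb <= delta t l.+1 + delta t l.+2) ->
  (forall l, \sum_k Tmat N t l k * y k = c l) ->
  (forall l, `|c l| <= C) ->
  forall k, `|y k| <= C / lb.
Proof.
move=> lb0 hd hs Hs Hc k.
have [l0 _ Hmax] := @arg_maxP _ _ _ k predT (fun i => `|y i|) isT.
have [d1 d2] := hd l0.
have := @pointwise R N t y c l0 `|y l0| d1 d2 (normr_ge0 _) (Hs l0)
   (fun k _ _ => Hmax k isT).
set s := delta t l0.+1 + delta t l0.+2 => H.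
have Hs' : s * `|y l0| <= C.
  apply: le_trans (Hc l0); move: H; set u := s * `|y l0|.
  have -> : 2 * s * `|y l0| = u + u by rewrite /u; ring.
  by rewrite lerD2r; apply.
have Hk : `|y k| <= `|y l0| := Hmax k isT.
apply: le_trans Hk _.
rewrite ler_pdivlMr // mulrC; apply: le_trans Hs'.
by apply: ler_wpM2r => //; apply: hs.
Qed.

Lemma decay (R : realFieldType) (N : nat) (t : nat -> R)
  (y c : 'I_(N.-1) -> R) (j : 'I_(N.-1)) (B : R) :
  (forall l : 'I_(N.-1), 0 <= delta t l.+1 /\ 0 <= delta t l.+2) ->
  (forall l : 'I_(N.-1), 0 < delta t l.+1 + delta t l.+2) ->
  0 <= B ->
  (forall l, \sum_k Tmat N t l k * y k = c l) ->
  (forall l, l != j -> c l = 0) ->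
  (forall k, `|y k| <= B) ->
  forall m (l : 'I_(N.-1)), (m + j <= l)%N || (m + l <= j)%N ->
    `|y l| <= B / 2 ^+ m.
Proof.
move=> hd hs B0 Hs Hc Hb m; elim: m => [|m IH] l Hl.
  by rewrite expr0 divr1; apply: Hb.
have lj : l != j by apply/eqP => e; move: Hl; rewrite e; lia.
have [d1 d2] := hd l.
have K0 : 0 <= B / 2 ^+ m by apply: divr_ge0 => //; apply: exprn_ge0.
have := @pointwise R N t y c l (B / 2 ^+ m) d1 d2 K0 (Hs l).
rewrite Hc // normr0 add0r.
set s := delta t l.+1 + delta t l.+2.
have s0 : 0 < s := hs l.
move=> H.
have {H} H : 2 * `|y l| <= B / 2 ^+ m.
  have H2 : s * (2 * `|y l|) <= s * (B / 2 ^+ m).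
    by rewrite mulrA [s * 2]mulrC; apply: H => k nk nz; have hk := @Tmat_off _ _ _ k l nk nz; apply: IH; lia.
  by rewrite ler_pM2l in H2.
by rewrite exprSr invfM mulrA ler_pdivlMr // mulrC.
Qed.

Ltac posi := repeat (apply: mulr_gt0); try done; try (apply: exprn_gt0; done); try (rewrite ltr0n; done).

Lemma pow_le (R : realFieldType) (a b : R) (n : nat) :
  0 <= a -> a <= b -> a ^+ n <= b ^+ n.
Proof.
move=> a0 ab; elim: n => [|n IH]; first by rewrite !expr0.
rewrite !exprS; apply: ler_pM => //; exact: exprn_ge0.
Qed.

Lemma final_arith (R : realFieldType) (alpha dlt : R) (m : nat) :
  0 < alpha -> alpha <= 1 -> 0 < dlt ->
  1 / (2 * alpha * dlt) / 2 ^+ m <=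
  (4 * alpha ^+ 2 * (1 + alpha) ^ ((m%:Z) - 1))^-1 * dlt^-1.
Proof.
move=> a0 a1 d0.
have -> : 1 / (2 * alpha * dlt) / 2 ^+ m = (2 * alpha * dlt * 2 ^+ m)^-1.
  by rewrite mul1r [RHS]invfM.
have pos := fun x : R => @mulr_gt0 R x.
case: m => [|m].
  have h1a : 0 < 1 + alpha by lra.
  set q := (1 + alpha)^-1.
  have q0 : 0 < q by rewrite invr_gt0.
  have q1 : q * (1 + alpha) = 1 by rewrite mulVf // gt_eqF.
  have h : 2 * alpha * q <= 1 by nra.
  rewrite exprN1 -/q -invfM lef_pV2 ?posrE ?expr0 ?mulr1.
  - have hh : 0 <= (1 - 2 * alpha * q) * (alpha * dlt).
      by apply: mulr_ge0; [lra | apply: ltW; apply: pos].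
    rewrite expr2; nra.
  - posi.
  - posi.
have -> : ((m.+1)%:Z - 1 = m%:Z)%R by lia.
rewrite -exprnP.
have P0 : 0 < (1 + alpha) ^+ m by apply: exprn_gt0; lra.
have PQ : (1 + alpha) ^+ m <= 2 ^+ m by apply: pow_le; lra.
have Q0 : 0 < 2 ^+ m.+1 :> R by apply: exprn_gt0.
rewrite -invfM lef_pV2 ?posrE.
- rewrite [2 ^+ m.+1]exprS expr2.
  set P := (1 + alpha) ^+ m in P0 PQ *; set Q := 2 ^+ m in PQ *.
  have h1 : alpha * P <= Q by nra.
  have hh : 0 <= (Q - alpha * P) * (alpha * dlt).
    by apply: mulr_ge0; [lra | apply: ltW; apply: pos].
  nra.
- posi.
- posi.
Qed.

Theorem lemma3 (R : realFieldType) (N : nat) (t : nat -> R) (alpha dlt : R) :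
  (2 <= N)%N ->
  t 0%N = 0 -> t N = 1 ->
  (forall k : nat, (k < N)%N -> t k < t k.+1) ->
  0 < alpha -> 0 < dlt ->
  (forall k : nat, (1 <= k <= N)%N -> alpha * dlt <= delta t k <= dlt) ->
  Tmat N t \in unitmx /\
  (forall i j : 'I_(N.-1),
     `|invmx (Tmat N t) i j|
       <= (4 * alpha ^+ 2 * (1 + alpha) ^ ((`|(i : int) - (j : int)|%N)%:Z - 1))^-1
          * dlt^-1).
Proof.
move=> N2 _ _ _ a0 d0 hb.
have a1 : alpha <= 1.
  have /andP[h1 h2] := hb 1%N (ltac:(apply/andP; split; lia)).
  have : alpha * dlt <= 1 * dlt by rewrite mul1r; apply: le_trans h2.
  by rewrite ler_pM2r.
have hk : forall l : 'I_(N.-1), alpha * dlt <= delta t l.+1 /\ alpha * dlt <= delta t l.+2.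
  move=> l; have lN := ltn_ord l.
  have /andP[h1 _] := hb l.+1 (ltac:(apply/andP; split; lia)).
  have /andP[h2 _] := hb l.+2 (ltac:(apply/andP; split; lia)).
  by split.
have ad0 : 0 < alpha * dlt by apply: mulr_gt0.
have hd : forall l : 'I_(N.-1), 0 <= delta t l.+1 /\ 0 <= delta t l.+2.
  move=> l; have [h1 h2] := hk l; split; apply: le_trans (ltW ad0) _ => //.
have hs : forall l : 'I_(N.-1), 2 * alpha * dlt <= delta t l.+1 + delta t l.+2.
  move=> l; have [h1 h2] := hk l; rewrite -mulrA mulr2n; lra.
have hs0 : forall l : 'I_(N.-1), 0 < delta t l.+1 + delta t l.+2.
  move=> l; apply: lt_le_trans (hs l); rewrite -mulrA; apply: mulr_gt0 => //.
have lb0 : 0 < 2 * alpha * dlt by rewrite -mulrA; apply: mulr_gt0 => //.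
have U : Tmat N t \in unitmx.
  rewrite -row_free_unit -kermx_eq0; apply/eqP/row_matrixP => i; rewrite row0.
  set u := row i (kermx _).
  have hu : u *m Tmat N t = 0 by rewrite /u -row_mul mulmx_ker row0.
  have Hs : forall l, \sum_k Tmat N t l k * u 0 k = (fun _ => 0) l.
    move=> l; transitivity ((u *m Tmat N t) 0 l); last by rewrite hu mxE.
    rewrite mxE.
    by apply: eq_bigr => k _; rewrite mulrC Tmat_sym.
  apply/rowP => k; rewrite [RHS]mxE; apply/eqP; rewrite -normr_le0.
  have := @global_bound R N t (fun k => u 0 k) (fun _ => 0) _ 0 lb0 hd hs Hs
    (fun _ => ltac:(by rewrite normr0)) k.
  by rewrite mul0r.
split => // i j.
set X := invmx (Tmat N t).
have Hs : forall l, \sum_k Tmat N t l k * X k j = (fun l => ((l == j)%:R : R)) l.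
  move=> l; have := congr1 (fun M : 'M[R]_(N.-1) => M l j) (mulmxV U); rewrite !mxE => <-.
  by [].
have Hc : forall l : 'I_(N.-1), `|((l == j)%:R : R)| <= 1.
  by move=> l; case: (l == j); rewrite ?normr1 ?normr0.
have G := @global_bound R N t (fun k => X k j) _ _ 1 lb0 hd hs Hs Hc.
have D := @decay R N t (fun k => X k j) _ j (1 / (2 * alpha * dlt)) hd hs0
  (ltac:(apply: divr_ge0 => //; exact: ltW)) Hs
  (fun l hl => ltac:(by rewrite /= (negbTE hl))) G.
apply: le_trans (D `|(i : int) - (j : int)|%N i _) _.
  lia.
exact: final_arith.
Qed.
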